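(* Let $w \in S_n$ with Lehmer code $L(w) = (L_1,\dots,L_n)$. Then $w$ avoids the patterns $1432$ and $312$ if and only if $L(w)$ satisfies all three of the following rules: (1) $L_i - L_{i+1} \le 1$ for all $1 \le i < n$; (2) $L_i - L_{i+1} \ge -1$ for all $1 \le i < n$; (3) whenever $i < j$ with $L_i < L_{i+1}$ and $L_j < L_{j+1}$, there is some $k$ with $i < k < j$ such that $L_k > L_{k+1}$.
   Context: The Lehmer code of $w \in S_n$ is $L(w) = (L_1,\dots,L_n)$ with $L_i = |\{j > i : w(j) < w(i)\}|$. A permutation $w$ contains a pattern $p \in S_k$ if there are indices $i_1 < \dots < i_k$ with $w(i_1),\dots,w(i_k)$ in the same relative order as $p(1),\dots,p(k)$; otherwise it avoids $p$. *)

(* Defs.v *)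
From mathcomp Require Import all_boot all_fingroup.
Set Implicit Arguments. Unset Strict Implicit. Unset Printing Implicit Defensive.

(* Permutations w in S_n are elements of 'S_n = {perm 'I_n}; positions and
   values are 0-indexed (position i here is position i+1 in the paper). *)

Definition lehmer (n : nat) (w : 'S_n) (i : 'I_n) : nat :=
  #|[set j : 'I_n | (i < j) && (w j < w i)]|.

Definition contains (n : nat) (w : 'S_n) (p : seq nat) : Prop :=
  exists f : 'I_(size p) -> 'I_n,
    (forall a b : 'I_(size p), a < b -> f a < f b) /\
    (forall a b : 'I_(size p), (w (f a) < w (f b)) = (nth 0 p a < nth 0 p b)).

Definition avoids (n : nat) (w : 'S_n) (p : seq nat) : Prop := ~ contains w p.

(* Main.v *)
Require Import Defs.
From mathcomp Require Import all_boot all_fingroup zify.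
From Stdlib Require Import Classical.
Set Implicit Arguments. Unset Strict Implicit. Unset Printing Implicit Defensive.

Lemma card_sum (T: finType) (P : pred T) : #|[set x | P x]| = \sum_x (P x : nat).
Proof. rewrite -sum1dep_card big_mkcond /=. apply: eq_bigr => x _. by case: (P x). Qed.

Lemma wEq n (w : 'S_n) (i j : 'I_n) : ((j : nat) == i) = ((w j : nat) == w i).
Proof. by rewrite !val_eqE (inj_eq perm_inj). Qed.

Lemma lehmer_asc n (w:'S_n) (i i' : 'I_n) : i' = i.+1 :> nat -> w i < w i' ->
 lehmer w i' = lehmer w i + #|[set j : 'I_n | (i' < j) && (w i < w j) && (w j < w i')]|.
Proof.
move=> Hi Hw. rewrite /lehmer !card_sum -big_split /=. apply: eq_bigr => j _.
have := wEq w i j; have := wEq w i' j. lia.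
Qed.

Lemma lehmer_desc n (w:'S_n) (i i' : 'I_n) : i' = i.+1 :> nat -> w i' < w i ->
 lehmer w i = (lehmer w i' + #|[set j : 'I_n | (i' < j) && (w i' < w j) && (w j < w i)]|).+1.
Proof.
move=> Hi Hw. rewrite /lehmer !card_sum -big_split /=.
rewrite (bigD1 i') //= [in RHS](bigD1 i') //=.
set S := \sum_(j < n | j != i') _.
have -> : S = \sum_(j < n | j != i') ((i' < j) && (w j < w i') +
       (i' < j) && (w i' < w j) && (w j < w i)).
  apply: eq_bigr => j Hj.
  have := wEq w i j; have := wEq w i' j. move: Hj; rewrite -val_eqE /=. lia.
rewrite !ltnn /= {1}Hi ltnSn Hw. done.
Qed.

Section S.
Variables (n : nat) (w : 'S_n).

Lemma wneq (i j : 'I_n) : ((j : nat) == i) = ((w j : nat) == w i).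
Proof. exact: wEq. Qed.

Lemma mk312 (a b c : 'I_n) : a < b -> b < c -> w b < w c -> w c < w a ->
  contains w [:: 3; 1; 2].
Proof.
move=> H1 H2 H3 H4.
exists (fun x : 'I_3 => nth a [:: a; b; c] x); split.
  move=> [[|[|[|x]]] Hx] //= [[|[|[|y]]] Hy] //=; lia.
move=> [[|[|[|x]]] Hx] //= [[|[|[|y]]] Hy] //=; lia.
Qed.

Lemma mk1432 (a b c d : 'I_n) : a < b -> b < c -> c < d ->
  w a < w d -> w d < w c -> w c < w b -> contains w [:: 1; 4; 3; 2].
Proof.
move=> H1 H2 H3 H4 H5 H6.
exists (fun x : 'I_4 => nth a [:: a; b; c; d] x); split.
  move=> [[|[|[|[|x]]]] Hx] //= [[|[|[|[|y]]]] Hy] //=; lia.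
move=> [[|[|[|[|x]]]] Hx] //= [[|[|[|[|y]]]] Hy] //=; lia.
Qed.

Lemma get312 : contains w [:: 3; 1; 2] ->
  exists a b c : 'I_n, [/\ a < b, b < c, w b < w c & w c < w a].
Proof.
move=> [f [Hm Hv]].
pose o0 := @Ordinal 3 0 isT; pose o1 := @Ordinal 3 1 isT; pose o2 := @Ordinal 3 2 isT.
exists (f o0), (f o1), (f o2); split.
- exact: (Hm o0 o1).
- exact: (Hm o1 o2).
- by rewrite (Hv o1 o2).
- by rewrite (Hv o2 o0).
Qed.

Lemma get1432 : contains w [:: 1; 4; 3; 2] ->
  exists a b c d : 'I_n, [/\ a < b, b < c, c < d &
     [/\ w a < w d, w d < w c & w c < w b]].
Proof.
move=> [f [Hm Hv]].
pose o0 := @Ordinal 4 0 isT; pose o1 := @Ordinal 4 1 isT;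
pose o2 := @Ordinal 4 2 isT; pose o3 := @Ordinal 4 3 isT.
exists (f o0), (f o1), (f o2), (f o3); split.
- exact: (Hm o0 o1).
- exact: (Hm o1 o2).
- exact: (Hm o2 o3).
split.
- by rewrite (Hv o0 o3).
- by rewrite (Hv o3 o2).
- by rewrite (Hv o2 o1).
Qed.

Lemma trans_ord (P : 'I_n -> bool) (b : 'I_n) : forall d (a : 'I_n),
  b - a = d.+1 -> P a -> ~~ P b ->
  exists k k' : 'I_n, [/\ k' = k.+1 :> nat, a <= k, k < b, P k & ~~ P k'].
Proof.
elim => [|d IH] a Hd Pa Pb.
  exists a, b; split => //; lia.
have Ha1 : a.+1 < n by have := ltn_ord b; lia.
pose a' := Ordinal Ha1.
case Pa': (P a').
  have [k [k' [E1 E2 E3 E4 E5]]] := IH a' ltac:(rewrite /=; lia) Pa' Pb.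
  have Ea : (a' : nat) = a.+1 by []. exists k, k'; split => //=; lia.
exists a, a'; split => //; [lia | by rewrite Pa'].
Qed.

Lemma trans2 (P : 'I_n -> bool) (a b : 'I_n) : a < b -> P a -> ~~ P b ->
  exists k k' : 'I_n, [/\ k' = k.+1 :> nat, a <= k, k < b, P k & ~~ P k'].
Proof. move=> Hab; apply: (trans_ord (d := (b - a).-1)); lia. Qed.


Lemma asc_le (i i' : 'I_n) : i' = i.+1 :> nat -> w i < w i' -> lehmer w i <= lehmer w i'.
Proof. move=> Hi H; rewrite (lehmer_asc Hi H); lia. Qed.

Lemma desc_lt (i i' : 'I_n) : i' = i.+1 :> nat -> w i' < w i -> lehmer w i' < lehmer w i.
Proof. move=> Hi H; rewrite (lehmer_desc Hi H); lia. Qed.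

Lemma le_asc (i i' : 'I_n) : i' = i.+1 :> nat -> lehmer w i <= lehmer w i' -> w i < w i'.
Proof.
move=> Hi Hl; have := wneq i i'; case: (ltngtP (w i) (w i')) => // H.
- have := desc_lt Hi H; lia.
- lia.
Qed.

Lemma lt_desc (i i' : 'I_n) : i' = i.+1 :> nat -> lehmer w i' < lehmer w i -> w i' < w i.
Proof.
move=> Hi Hl; have := wneq i i'; case: (ltngtP (w i) (w i')) => // H.
- have := asc_le Hi H; lia.
- lia.
Qed.

Lemma fwd1 : ~ contains w [:: 3; 1; 2] ->
  forall i j : 'I_n, j = i.+1 :> nat -> lehmer w i <= (lehmer w j).+1.
Proof.
move=> N i j Hij. case: (ltngtP (w i) (w j)) => H.
- have := asc_le Hij H; lia.
- rewrite (lehmer_desc Hij H). set B := [set _ | _].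
  case: (posnP #|B|) => [->|]; first by rewrite addn0.
  move/card_gt0P => [m]; rewrite inE => /andP[/andP[H1 H2] H3].
  case: N; apply: (mk312 (a := i) (b := j) (c := m)) => //; lia.
- have := wneq i j; lia.
Qed.

Lemma fwd2 : ~ contains w [:: 3; 1; 2] -> ~ contains w [:: 1; 4; 3; 2] ->
  forall i j : 'I_n, j = i.+1 :> nat -> lehmer w j <= (lehmer w i).+1.
Proof.
move=> N1 N2 i j Hij. case: (ltngtP (w i) (w j)) => H.
- rewrite (lehmer_asc Hij H). set B := [set _ | _].
  case: (leqP #|B| 1) => HB; first lia.
  move/card_gt1P: HB => [m1 [m2 [Hm1 Hm2 Hne]]].
  rewrite !inE in Hm1 Hm2.
  move: Hm1 Hm2 => /andP[/andP[Ha1 Ha2] Ha3] /andP[/andP[Hb1 Hb2] Hb3].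
  have key : forall x y : 'I_n, j < x -> x < y -> w i < w x -> w x < w j ->
      w i < w y -> w y < w j -> False.
    move=> x y Hx Hxy Hx1 Hx2 Hy1 Hy2.
    case: (ltngtP (w x) (w y)) => Hw.
    + by apply: N1; apply: (mk312 (a := j) (b := x) (c := y)).
    + apply: N2; apply: (mk1432 (a := i) (b := j) (c := x) (d := y)) => //; lia.
    + have := wneq x y; lia.
  move: Hne; rewrite -val_eqE /= => Hne.
  case: (ltngtP m1 m2) => Hm.
  + by exfalso; apply: (key m1 m2).
  + by exfalso; apply: (key m2 m1).
  + lia.
- have := desc_lt Hij H; lia.
- have := wneq i j; lia.
Qed.

Lemma fwd3 : ~ contains w [:: 3; 1; 2] -> ~ contains w [:: 1; 4; 3; 2] ->
      (forall i i' j j' : 'I_n, i' = i.+1 :> nat -> j' = j.+1 :> nat ->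
         i < j -> lehmer w i < lehmer w i' -> lehmer w j < lehmer w j' ->
         exists k k' : 'I_n, [/\ k' = k.+1 :> nat, i < k, k < j &
                                 lehmer w k > lehmer w k']).
Proof.
move=> N1 N2 i i' j j' Hi Hj Hij Hli Hlj.
apply: NNPP => Hno.
have noDesc : forall k k' : 'I_n, k' = k.+1 :> nat -> i < k -> k < j -> w k < w k'.
  move=> k k' Hk H1 H2; apply: (le_asc Hk); rewrite leqNgt; apply/negP => H.
  by apply: Hno; exists k, k'.
have Hai := le_asc Hi (ltnW Hli).
have Haj := le_asc Hj (ltnW Hlj).
have mono : forall d (p : 'I_n), (p : nat) = i' + d -> p <= j' -> w i' <= w p.
  elim => [|d IH] p Hp Hpj.
    have -> : p = i' by apply: val_inj; rewrite /= Hp addn0.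
    done.
  have Hq : i' + d < n by have := ltn_ord p; lia.
  pose q := Ordinal Hq. have Eq : (q : nat) = i' + d by [].
  have := IH q Eq ltac:(lia).
  have Hqp : w q < w p.
    case: (ltnP q j) => Hqj.
      exact: (noDesc q p ltac:(lia) ltac:(lia) Hqj).
    have -> : q = j by apply: val_inj; rewrite /=; lia.
    have -> : p = j' by apply: val_inj; rewrite /=; lia.
    exact: Haj.
  lia.
have mono' : forall p : 'I_n, i' <= p -> p <= j' -> w i' <= w p.
  move=> p H1 H2; apply: (mono (p - i')) => //; lia.
have := lehmer_asc Hi Hai. set B := [set _ | _] => HB.
have : 0 < #|B| by lia.
move/card_gt0P => [m]; rewrite inE => /andP[/andP[Hm1 Hm2] Hm3].
have := lehmer_asc Hj Haj. set B' := [set _ | _] => HB'.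
have : 0 < #|B'| by lia.
move/card_gt0P => [m']; rewrite inE => /andP[/andP[Hm1' Hm2'] Hm3'].
have Hjm : j' < m.
  rewrite ltnNge; apply/negP => H. have := mono' m (ltnW Hm1) H. lia.
have Hij' := mono' j ltac:(lia) ltac:(lia).
case: (ltngtP m m') => Hmm.
- by apply: N1; apply: (mk312 (a := j') (b := m) (c := m')) => //; lia.
- by apply: N2; apply: (mk1432 (a := i) (b := j') (c := m') (d := m)) => //; lia.
- have := wneq m m'; lia.
Qed.

Lemma bwd312 : (forall i j : 'I_n, j = i.+1 :> nat -> lehmer w i <= (lehmer w j).+1) ->
  ~ contains w [:: 3; 1; 2].
Proof.
move=> R1 /get312 [a [b [c [Hab Hbc Hwb Hwc]]]].
have [k [k' [Hk Hak Hkb Pk Pk']]] :=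
  trans2 (P := fun k => w c < w k) Hab Hwc ltac:(by rewrite -leqNgt ltnW).
move: Pk Pk' => /= Pk Pk'; rewrite -leqNgt in Pk'.
have Hk'c : w k' < w c by have := wneq c k'; lia.
have Hkk : w k' < w k by lia. have := lehmer_desc Hk Hkk. set B := [set _ | _] => HB.
have : 0 < #|B|.
  apply/card_gt0P; exists c; rewrite inE; apply/andP; split; [apply/andP; split|]; lia.
have := R1 k k' Hk; lia.
Qed.

Lemma bwd1432 :
  (forall i j : 'I_n, j = i.+1 :> nat -> lehmer w i <= (lehmer w j).+1) ->
  (forall i j : 'I_n, j = i.+1 :> nat -> lehmer w j <= (lehmer w i).+1) ->
  (forall i i' j j' : 'I_n, i' = i.+1 :> nat -> j' = j.+1 :> nat ->
         i < j -> lehmer w i < lehmer w i' -> lehmer w j < lehmer w j' ->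
         exists k k' : 'I_n, [/\ k' = k.+1 :> nat, i < k, k < j &
                                 lehmer w k > lehmer w k']) ->
  ~ contains w [:: 1; 4; 3; 2].
Proof.
move=> R1 R2 R3.
have N312 := bwd312 R1.
suff key : forall g (a b c d : 'I_n), b - a <= g -> a < b -> b < c -> c < d ->
    w a < w d -> w d < w c -> w c < w b -> False.
  move/get1432 => [a [b [c [d [H1 H2 H3 [H4 H5 H6]]]]]].
  exact: (key (b - a) a b c d).
elim => [|g IH] a b c d Hg Hab Hbc Hcd H1 H2 H3; first lia.
have [i [i1 [Hi Hai Hib Pi Pi1]]] :=
  trans2 (P := fun k => w k < w d) Hab H1 ltac:(rewrite -leqNgt; lia).
move: Pi Pi1 => /= Pi Pi1; rewrite -leqNgt in Pi1.
have Hdi1 : w d < w i1 by have := wneq d i1; lia.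
have Hasc : w i < w i1 by lia.
have := lehmer_asc Hi Hasc. set B := [set _ | _] => HB.
have dB : d \in B by rewrite inE; apply/andP; split; [apply/andP; split|]; lia.
case: (ltngtP (w c) (w i1)) => Hci1.
- have cB : c \in B by rewrite inE; apply/andP; split; [apply/andP; split|]; lia.
  have : 1 < #|B|.
    apply/card_gt1P; exists c, d; split => //.
    rewrite -val_eqE /=; lia.
  have := R2 i i1 Hi; lia.
- have Hi1b : i1 < b by have := wneq b i1; lia.
  have [e [e1 [He Hie Heb Pe Pe1]]] :=
    trans2 (P := fun k => w k < w c) Hi1b Hci1 ltac:(rewrite -leqNgt; lia).
  move: Pe Pe1 => /= Pe Pe1; rewrite -leqNgt in Pe1.
  have Hce1 : w c < w e1 by have := wneq c e1; lia.
  have Hee : w e < w e1 by lia. have := lehmer_asc He Hee. set C := [set _ | _] => HC.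
  have cC : c \in C by rewrite inE; apply/andP; split; [apply/andP; split|]; lia.
  have Hle : lehmer w e < lehmer w e1.
    have : 0 < #|C| by apply/card_gt0P; exists c.
    lia.
  have Hli : lehmer w i < lehmer w i1.
    have : 0 < #|B| by apply/card_gt0P; exists d.
    lia.
  have [k [k1 [Hk Hik Hke Hlk]]] := R3 i i1 e e1 Hi He ltac:(lia) Hli Hle.
  have Hwk := lt_desc Hk Hlk.
  case: (ltngtP (w k1) (w d)) => Hk1d.
  + apply: (IH k1 b c d) => //; lia.
  + case: (ltngtP (w c) (w k)) => Hck;
     first [ by apply: N312; apply: (mk312 (a := k) (b := k1) (c := c)) => //; lia
           | by apply: (IH i k k1 d) => //; lia
           | by have := wneq c k; lia ].
  + have := wneq d k1; lia.
- have := wneq c i1; lia.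
Qed.

End S.

Theorem lemma11 (n : nat) (w : 'S_n) :
  (avoids w [:: 1; 4; 3; 2] /\ avoids w [:: 3; 1; 2]) <->
  [/\ (* rule (1): L_i - L_{i+1} <= 1 *)
      (forall i j : 'I_n, j = i.+1 :> nat -> lehmer w i <= (lehmer w j).+1),
      (* rule (2): L_i - L_{i+1} >= -1 *)
      (forall i j : 'I_n, j = i.+1 :> nat -> lehmer w j <= (lehmer w i).+1) &
      (* rule (3) *)
      (forall i i' j j' : 'I_n, i' = i.+1 :> nat -> j' = j.+1 :> nat ->
         i < j -> lehmer w i < lehmer w i' -> lehmer w j < lehmer w j' ->
         exists k k' : 'I_n, [/\ k' = k.+1 :> nat, i < k, k < j &
                                 lehmer w k > lehmer w k'])].
Proof.
split.
- move=> [N2 N1]; split.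
  + exact: fwd1.
  + exact: fwd2.
  + exact: fwd3.
- move=> [R1 R2 R3]; split.
  + exact: bwd1432.
  + exact: bwd312.
Qed.
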